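(* Suppose $p\in\mathbb{C}[z_1,z_2]$ is semi-stable, $\tilde p/p$ is non-tangentially $C^k$ at a point $\lambda\in\mathbb{T}^2$, and $p$ vanishes to order $M$ at $\lambda$. Then $N_\lambda(p,\tilde p)\ge M(M+k+1)$.
   Context: $\mathbb{D}$ is the open unit disk, $\mathbb{T}$ the unit circle. For $p$ of bidegree $(n,m)$, $\tilde p(z)=z_1^nz_2^m\overline{p(1/\bar z_1,1/\bar z_2)}$; $p$ is semi-stable if it has no zeros in $\mathbb{D}^2$ and $p,\tilde p$ have no common factor. For $\lambda\in\mathbb{T}^2$ and $c>1$ let $\Gamma_c(\lambda)$ be the set of $z\in\mathbb{D}^2$ for which any two of $|z_1-\lambda_1|,|z_2-\lambda_2|,1-|z_1|,1-|z_2|$ have ratio in $[1/c,c]$. A function $f$ on $\mathbb{D}^2$ is non-tangentially $C^k$ at $\lambda$ if there is a polynomial $L$ of degree at most $k$ with $f(z)-L(z-\lambda)=o(|z-\lambda|^k)$ as $z\to\lambda$ in $\Gamma_c(\lambda)$, for every $c>1$. Vanishing to order $M$ at $\lambda$ means the lowest nonzero homogeneous term of the Taylor expansion at $\lambda$ has degree $M$. $N_\lambda(f,g)=\dim_{\mathbb{C}}\mathcal{O}_\lambda/\langle f,g\rangle\mathcal{O}_\lambda$ is the intersection multiplicity ($\mathcal{O}_\lambda$ = rational functions with denominator nonvanishing at $\lambda$). *)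

(* Defs.v *)
(* complex numbers R[i] over R : realType (mathcomp-real-closed),
   bivariate polynomials as {poly {poly C}} (outer variable z2, inner variable z1),
   rational functions as {fraction {poly {poly C}}}. *)
From HB Require Import structures.
From mathcomp Require Import all_boot all_order all_algebra.
From mathcomp Require Import complex.
From mathcomp Require Import reals.
Set Implicit Arguments. Unset Strict Implicit. Unset Printing Implicit Defensive.
Import Order.TTheory GRing.Theory Num.Theory.
Local Open Scope ring_scope.

Section Defs.
Variable R : realType.
Local Notation C := (R[i]).
Local Notation P := {poly {poly C}}.

Definition ev2 (p : P) (z1 z2 : C) : C := (p.[z2%:P]).[z1].

Definition coef2 (p : P) (i j : nat) : C := p`_j`_i.

Definition deg1 (p : P) : nat := \max_(j < size p) (size (nth 0%R p j)).-1.
Definition deg2 (p : P) : nat := (size p).-1.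

(* z1^n z2^m conj(p(1/conj z1, 1/conj z2)), written coefficientwise *)
Definition reflect2 (n m : nat) (p : P) : P :=
  \poly_(j < m.+1) \poly_(i < n.+1) Num.conj (coef2 p (n - i) (m - j)).

Definition ptilde (p : P) : P := reflect2 (deg1 p) (deg2 p) p.

Definition semi_stable (p : P) : Prop :=
  (forall z1 z2 : C, `|z1| < 1 -> `|z2| < 1 -> ev2 p z1 z2 != 0) /\
  (forall q r s : P, p = q * r -> ptilde p = q * s -> q \is a GRing.unit).

(* p(w1 + l1, w2 + l2) *)
Definition shift2 (p : P) (l1 l2 : C) : P :=
  (map_poly (fun r : {poly C} => r \Po ('X + l1%:P)) p) \Po ('X + (l2%:P)%:P).

Definition vanishes_to_order (p : P) (l1 l2 : C) (M : nat) : Prop :=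
  (exists i j, (i + j = M)%N /\ coef2 (shift2 p l1 l2) i j != 0) /\
  (forall i j, (i + j < M)%N -> coef2 (shift2 p l1 l2) i j = 0).

Definition dist2 (z1 z2 l1 l2 : C) : C := sqrtC (`|z1 - l1| ^+ 2 + `|z2 - l2| ^+ 2).

Definition Gamma (c : R) (l1 l2 z1 z2 : C) : Prop :=
  `|z1| < 1 /\ `|z2| < 1 /\
  let q := [:: `|z1 - l1|; `|z2 - l2|; 1 - `|z1|; 1 - `|z2|] in
  forall x y, x \in q -> y \in q -> x <= (c%:C)%C * y /\ y <= (c%:C)%C * x.

Definition nt_Ck (f : C -> C -> C) (l1 l2 : C) (k : nat) : Prop :=
  exists L : P, (forall i j, (k < i + j)%N -> coef2 L i j = 0) /\
  forall c : R, 1 < c -> forall eps : R, 0 < eps -> exists2 delta : R, 0 < delta &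
    forall z1 z2 : C, Gamma c l1 l2 z1 z2 -> dist2 z1 z2 l1 l2 < (delta%:C)%C ->
      `|f z1 z2 - ev2 L (z1 - l1) (z2 - l2)| <= (eps%:C)%C * dist2 z1 z2 l1 l2 ^+ k.

Local Notation F := {fraction P}.
Local Notation tofrac := (@FracField.tofrac P).

Definition in_Olocal (l1 l2 : C) (x : F) : Prop :=
  exists a b : P, ev2 b l1 l2 != 0 /\ x = tofrac a / tofrac b.

Definition in_ideal_loc (f g : P) (l1 l2 : C) (x : F) : Prop :=
  exists u v : F, in_Olocal l1 l2 u /\ in_Olocal l1 l2 v /\
    x = u * tofrac f + v * tofrac g.

(* N_l(f,g) >= n, i.e. dim_C O_l / <f,g> O_l >= n (possibly infinite):
   there are n elements of O_l whose classes are C-linearly independent *)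
Definition intersection_multiplicity_ge (f g : P) (l1 l2 : C) (n : nat) : Prop :=
  exists r : 'I_n -> F, (forall i, in_Olocal l1 l2 (r i)) /\
    forall a : 'I_n -> C,
      in_ideal_loc f g l1 l2 (\sum_(i < n) tofrac (((a i)%:P)%:P) * r i) ->
      forall i, a i = 0.

End Defs.

(* Main.v *)
Require Import Defs.
From HB Require Import structures.
From mathcomp Require Import all_boot all_order all_algebra.
From mathcomp Require Import complex.
From mathcomp Require Import reals.
From mathcomp Require Import zify ring lra.
Set Implicit Arguments. Unset Strict Implicit. Unset Printing Implicit Defensive.
Import Order.TTheory GRing.Theory Num.Theory.
Local Open Scope ring_scope.
Section Alg.
Variable R : realType.
Local Notation C := (R[i]).
Local Notation P := {poly {poly C}}.

Definition Yp (a : C) : P := 'X + (a%:P)%:P.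

Lemma shift2E (p : P) a b :
  shift2 p a b = comp_poly (Yp b) (map_poly (comp_poly ('X + a%:P)) p).
Proof. by []. Qed.

Lemma shift2D (p q : P) a b : shift2 (p + q) a b = shift2 p a b + shift2 q a b.
Proof. by rewrite !shift2E !rmorphD. Qed.
Lemma shift2M (p q : P) a b : shift2 (p * q) a b = shift2 p a b * shift2 q a b.
Proof. by rewrite !shift2E !rmorphM. Qed.
Lemma shift2C (c : C) a b : shift2 (c%:P%:P) a b = c%:P%:P.
Proof. by rewrite shift2E map_polyC /= comp_polyC comp_polyC. Qed.

Lemma ev2_shift (p : P) a b w1 w2 : ev2 (shift2 p a b) w1 w2 = ev2 p (w1 + a) (w2 + b).
Proof.
rewrite /ev2 shift2E horner_comp /Yp !hornerE -polyCD.
have -> : (w2 + b)%:P = comp_poly ('X + a%:P) (w2 + b)%:P by rewrite [RHS]comp_polyC.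
by rewrite horner_map /= comp_polyC horner_comp !hornerE.
Qed.

Lemma shift2_comp (g : P) a1 a2 b1 b2 :
  shift2 (shift2 g a1 a2) b1 b2 = shift2 g (a1 + b1) (a2 + b2).
Proof.
rewrite !shift2E map_comp_poly -map_poly_comp.
have -> : map_poly (comp_poly ('X + b1%:P)) (Yp a2) = Yp a2.
  by rewrite /Yp rmorphD /= map_polyX map_polyC /= comp_polyC.
rewrite -comp_polyA.
have -> : Yp a2 \Po Yp b2 = Yp (a2 + b2).
  by rewrite /Yp comp_polyD comp_polyX comp_polyC !polyCD addrA (addrAC _ (b2%:P%:P)).
congr comp_poly; apply: eq_map_poly => r /=.
by rewrite -comp_polyA comp_polyD comp_polyX comp_polyC polyCD addrA (addrAC _ (b1%:P)).
Qed.

Lemma shift2_0 (g : P) : shift2 g 0 0 = g.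
Proof.
rewrite shift2E /Yp !addr0.
have -> : map_poly (comp_poly 'X) g = g.
  by apply: map_poly_id => r _; rewrite comp_polyXr.
by rewrite comp_polyXr.
Qed.
End Alg.
Section Ord.
Variable R : realType.
Local Notation C := (R[i]).
Local Notation P := {poly {poly C}}.
Implicit Types f g : P.

Definition ordge f (d : nat) := forall i j, (i + j < d)%N -> coef2 f i j = 0.

Lemma coef2D f g i j : coef2 (f + g) i j = coef2 f i j + coef2 g i j.
Proof. by rewrite /coef2 !coefD. Qed.
Lemma coef2N f i j : coef2 (- f) i j = - coef2 f i j.
Proof. by rewrite /coef2 !coefN. Qed.
Lemma coef2B f g i j : coef2 (f - g) i j = coef2 f i j - coef2 g i j.
Proof. by rewrite coef2D coef2N. Qed.
Lemma coef2CM (c : C) f i j : coef2 (c%:P%:P * f) i j = c * coef2 f i j.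
Proof. by rewrite /coef2 !coefCM. Qed.
Lemma coef2_sum I (r : seq I) (Q : pred I) (F : I -> P) i j :
  coef2 (\sum_(x <- r | Q x) F x) i j = \sum_(x <- r | Q x) coef2 (F x) i j.
Proof. by rewrite /coef2 !coef_sum. Qed.

Lemma coef2M f g i j : coef2 (f * g) i j =
  \sum_(j1 < j.+1) \sum_(i1 < i.+1) coef2 f i1 j1 * coef2 g (i - i1) (j - j1).
Proof. by rewrite /coef2 coefM coef_sum; apply: eq_bigr => j1 _; rewrite coefM. Qed.

Lemma ordgeM f g a b : ordge f a -> ordge g b -> ordge (f * g) (a + b).
Proof.
move=> hf hg i j hij; rewrite coef2M; apply: big1 => j1 _; apply: big1 => i1 _.
have h1 := ltn_ord j1; have h2 := ltn_ord i1.
case: (ltnP (i1 + j1) a) => h; first by rewrite hf // mul0r.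
by rewrite hg ?mulr0 //; lia.
Qed.

Lemma ordgeD f g d : ordge f d -> ordge g d -> ordge (f + g) d.
Proof. by move=> hf hg i j h; rewrite coef2D hf ?hg ?addr0. Qed.
Lemma ordgeN f d : ordge f d -> ordge (- f) d.
Proof. by move=> hf i j h; rewrite coef2N hf ?oppr0. Qed.
Lemma ordgeB f g d : ordge f d -> ordge g d -> ordge (f - g) d.
Proof. by move=> hf hg; apply: ordgeD => //; apply: ordgeN. Qed.
Lemma ordge0 f : ordge f 0.
Proof. by move=> i j. Qed.
Lemma ordge_le f a b : ordge f a -> (b <= a)%N -> ordge f b.
Proof. move=> hf hb i j h; apply: hf; lia. Qed.
Lemma ordgeX f k : ordge f 1 -> ordge (f ^+ k) k.
Proof.
move=> hf; elim: k => [|k ih]; first exact: ordge0.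
by rewrite exprS -add1n; apply: ordgeM.
Qed.

Definition mono (i j : nat) : P := ('X^i)%:P * 'X^j.
Lemma coef2_mono a b i j : coef2 (mono a b) i j = ((i == a) && (j == b))%:R.
Proof.
rewrite /coef2 /mono coefMXn; case: ltnP => h.
  by rewrite coef0 (ltn_eqF h) andbF.
rewrite coefC; case: eqP => e.
  have E : j = b by lia.
  by rewrite E eqxx andbT coefXn.
have /negbTE -> : j != b by apply/eqP; lia.
by rewrite coef0 andbF.
Qed.

Definition tri d := {x : 'I_d * 'I_d | (x.1 + x.2 < d)%N}.
Definition ti d (x : tri d) : nat := (val x).1.
Definition tj d (x : tri d) : nat := (val x).2.
Lemma tri_inj d (x y : tri d) : ti x = ti y -> tj x = tj y -> x = y.
Proof.
move=> h1 h2; apply: val_inj; case: x h1 h2 => [[a b] ?]; case: y => [[c e] ?] /=.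
by rewrite /ti /tj /= => /val_inj -> /val_inj ->.
Qed.
Lemma tri_ex d i j : (i + j < d)%N -> exists y : tri d, ti y = i /\ tj y = j.
Proof.
move=> h; have hi : (i < d)%N by lia. have hj : (j < d)%N by lia.
by exists (exist _ (Ordinal hi, Ordinal hj) h).
Qed.
Lemma tri_lt d (x : tri d) : (ti x + tj x < d)%N.
Proof. exact: (valP x). Qed.

Definition polyF d (F : tri d -> C) : P :=
  \sum_(x : tri d) (F x)%:P%:P * mono (ti x) (tj x).
Lemma coef2_polyF d F (y : tri d) : coef2 (polyF F) (ti y) (tj y) = F y.
Proof.
rewrite coef2_sum (bigD1 y) //= coef2CM coef2_mono !eqxx mulr1 big1 ?addr0 //.
move=> x hx; rewrite coef2CM coef2_mono.
case: eqP => [e1|]; last by rewrite mulr0.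
case: eqP => [e2|]; last by rewrite mulr0.
by move: hx; rewrite (tri_inj e1 e2) eqxx.
Qed.

Definition trunc d f : P := polyF (fun x : tri d => coef2 f (ti x) (tj x)).
Lemma ordge_trunc d f : ordge (f - trunc d f) d.
Proof.
move=> i j h; have [y [<- <-]] := tri_ex h.
by rewrite coef2B coef2_polyF subrr.
Qed.

Definition vecf d f : 'rV[C]_#|{: tri d}| :=
  \row_k coef2 f (ti (enum_val k)) (tj (enum_val k)).
Definition polyv d (v : 'rV[C]_#|{: tri d}|) : P := polyF (fun x => v 0 (enum_rank x)).

Lemma vecf_polyv d v : vecf d (@polyv d v) = v.
Proof. by apply/rowP => k; rewrite mxE coef2_polyF enum_valK. Qed.
Lemma vecfD d f g : vecf d (f + g) = vecf d f + vecf d g.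
Proof. by apply/rowP => k; rewrite !mxE coef2D. Qed.
Lemma vecfCM d (c : C) f : vecf d (c%:P%:P * f) = c *: vecf d f.
Proof. by apply/rowP => k; rewrite !mxE coef2CM. Qed.
Lemma vecf_sum d I (r : seq I) (F : I -> P) :
  vecf d (\sum_(x <- r) F x) = \sum_(x <- r) vecf d (F x).
Proof.
elim: r => [|x r ih]; first by rewrite !big_nil; apply/rowP => k; rewrite !mxE /coef2 !coef0.
by rewrite !big_cons vecfD ih.
Qed.
Lemma vecf_ordge d f g : ordge (f - g) d -> vecf d f = vecf d g.
Proof.
move=> h; apply/rowP => k; rewrite !mxE; apply/eqP; rewrite -subr_eq0 -coef2B.
by rewrite h // tri_lt.
Qed.

Lemma polyvD d v w : @polyv d (v + w) = polyv v + polyv w.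
Proof.
by rewrite /polyv /polyF -big_split /=; apply: eq_bigr => x _; rewrite mxE polyCD polyCD mulrDl.
Qed.
Lemma polyvZ d (c : C) v : @polyv d (c *: v) = c%:P%:P * polyv v.
Proof.
rewrite /polyv /polyF mulr_sumr; apply: eq_bigr => x _.
by rewrite mxE !polyCM mulrA.
Qed.
Lemma polyv0 d : @polyv d 0 = 0.
Proof. by rewrite /polyv /polyF big1 // => x _; rewrite mxE ?mulr0n !polyC0 mul0r. Qed.
Lemma polyv_sum d I (r : seq I) (F : I -> 'rV[C]_#|{: tri d}|) :
  polyv (\sum_(x <- r) F x) = \sum_(x <- r) polyv (F x).
Proof.
elim: r => [|x r ih]; first by rewrite !big_nil polyv0.
by rewrite !big_cons polyvD ih.
Qed.
End Ord.
Arguments mono {R}.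
Section Count.
Lemma lt_addl i j d : (i + j < d)%N -> (i < d)%N. Proof. lia. Qed.
Lemma lt_addr i j d : (i + j < d)%N -> (j < d)%N. Proof. lia. Qed.
Definition mkT d i j (h : (i + j < d)%N) : tri d :=
  exist _ (Ordinal (lt_addl h), Ordinal (lt_addr h)) h.

Lemma c1 m n (x : tri m) : (ti x + tj x < m + n)%N.
Proof. have := tri_lt x; lia. Qed.
Lemma c2 m n (x : tri n) : ((ti x + m) + tj x < m + n)%N.
Proof. have := tri_lt x; lia. Qed.
Lemma c3 m n (x : 'I_m * 'I_n) : ((x.1 : nat) + (m - x.1 + x.2) < m + n)%N.
Proof. case: x => [a b] /=; have := ltn_ord a; have := ltn_ord b; lia. Qed.

Definition gT m n (x : (tri m + tri n) + ('I_m * 'I_n)) : tri (m + n) :=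
  match x with
  | inl (inl y) => mkT (c1 n y)
  | inl (inr y) => mkT (c2 m y)
  | inr y => mkT (c3 y)
  end.

Lemma gT_inj m n : injective (@gT m n).
Proof.
have key : forall x y, ti (@gT m n x) = ti (@gT m n y) -> tj (@gT m n x) = tj (@gT m n y) -> x = y.
  move=> [[x|x]|[a b]] [[y|y]|[c e]] /=; rewrite /ti /tj /=.
  - by move=> h1 h2; congr inl; congr inl; apply: tri_inj.
  - have := tri_lt x; have := tri_lt y; rewrite /ti /tj /= => *; exfalso; lia.
  - have := tri_lt x; have := ltn_ord c; rewrite /ti /tj /= => *; exfalso; lia.
  - have := tri_lt x; have := tri_lt y; rewrite /ti /tj /= => *; exfalso; lia.
  - move=> h1 h2; congr inl; congr inr; apply: tri_inj; rewrite /ti /tj /=; lia.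
  - have := ltn_ord c; move=> *; exfalso; lia.
  - have := tri_lt y; have := ltn_ord a; rewrite /ti /tj /= => *; exfalso; lia.
  - have := ltn_ord a; move=> *; exfalso; lia.
  - have := ltn_ord a; have := ltn_ord c => hc ha h1 h2.
    congr inr; congr pair; apply: val_inj => /=; lia.
by move=> x y e; apply: key; rewrite e.
Qed.

Lemma tri_count m n : (#|{: tri m}| + #|{: tri n}| + m * n <= #|{: tri (m + n)}|)%N.
Proof.
have := @leq_card _ _ (@gT m n) (@gT_inj m n).
by rewrite !card_sum card_prod !card_ord.
Qed.
End Count.
Section Key.
Variable R : realType.
Local Notation C := (R[i]).
Local Notation P := {poly {poly C}}.

Lemma key (p q : P) m n : ordge p m -> ordge q n ->
  exists r : 'I_(m * n) -> P, forall a : 'I_(m * n) -> C,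
   (exists U V B : P, coef2 B 0 0 != 0 /\
       (\sum_i (a i)%:P%:P * r i) * B = U * p + V * q) -> forall i, a i = 0.
Proof.
move=> hp hq; set t := (m + n)%N.
pose G1 : 'M[C]_(#|{: tri n}|, #|{: tri t}|) :=
  \matrix_k vecf t (mono (ti (enum_val k)) (tj (enum_val k)) * p).
pose G2 : 'M[C]_(#|{: tri m}|, #|{: tri t}|) :=
  \matrix_k vecf t (mono (ti (enum_val k)) (tj (enum_val k)) * q).
pose G := (G1 + G2)%MS.
have rG : (\rank G <= #|{: tri n}| + #|{: tri m}|)%N.
  apply: leq_trans (mxrank_adds_leqif G1 G2).1 _.
  by rewrite leq_add // rank_leq_row.
have hmn : (m * n <= \rank G^C)%N.
  by rewrite mxrank_compl; have := tri_count m n; rewrite -/t; lia.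
pose K := row_base (G^C)%MS.
exists (fun i => polyv (row (widen_ord hmn i) K)).
move=> a [U [V [B [hB E]]]].
pose u : 'rV[C]_(\rank G^C) := \row_j \sum_(i < m * n | widen_ord hmn i == j) a i.
pose w := u *m K.
have Ew : \sum_i (a i)%:P%:P * polyv (row (widen_ord hmn i) K) = polyv w.
  rewrite /w mulmx_sum_row polyv_sum (partition_big (widen_ord hmn) xpredT) //=.
  apply: eq_bigr => j _; rewrite polyvZ mxE !rmorph_sum /= mulr_suml.
  by apply: eq_bigr => i /eqP <-.
rewrite Ew in E.
have wG : (w <= G)%MS.
  set s := polyv w in E.
  set b := coef2 B 0 0 in hB.
  pose Nn := 1 - (b^-1)%:P%:P * B.
  have hN : ordge Nn 1.
    move=> i j h; have [-> ->] : i = 0%N /\ j = 0%N by lia.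
    by rewrite coef2B coef2CM mulVf // /coef2 !coef1 /= subrr.
  pose Gs := \sum_(j < t) Nn ^+ j.
  have e1 : 1 - Nn ^+ t = (b^-1)%:P%:P * B * Gs.
    have h := subrX1 Nn t.
    rewrite (_ : Nn ^+ t = 1 + (Nn - 1) * Gs); last by rewrite -h; ring.
    by rewrite /Nn; ring.
  set U' := (b^-1)%:P%:P * Gs * U.
  set V' := (b^-1)%:P%:P * Gs * V.
  have e2 : s - (U' * p + V' * q) = s * Nn ^+ t.
    transitivity (s * (1 - Nn ^+ t) + s * Nn ^+ t - (U' * p + V' * q)); first ring.
    rewrite e1 (_ : s * ((b^-1)%:P%:P * B * Gs) = (b^-1)%:P%:P * Gs * (s * B)); last ring.
    by rewrite E /U' /V'; ring.
  have o1 : ordge (s - (U' * p + V' * q)) t.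
    by rewrite e2 -(add0n t); apply: ordgeM; [apply: ordge0 | apply: ordgeX].
  have o2 : ordge ((U' - trunc n U') * p) t.
    by rewrite /t addnC; apply: ordgeM => //; apply: ordge_trunc.
  have o3 : ordge ((V' - trunc m V') * q) t.
    by apply: ordgeM => //; apply: ordge_trunc.
  have o4 : ordge (s - (trunc n U' * p + trunc m V' * q)) t.
    have -> : s - (trunc n U' * p + trunc m V' * q) =
       (s - (U' * p + V' * q)) + (U' - trunc n U') * p + (V' - trunc m V') * q by ring.
    by apply: ordgeD => //; apply: ordgeD.
  have := vecf_ordge o4; rewrite /s vecf_polyv => ->.
  rewrite vecfD; apply: addmx_sub_adds.
  - rewrite /trunc /polyF mulr_suml vecf_sum; apply: summx_sub => x _.
    rewrite -mulrA vecfCM; apply: scalemx_sub.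
    have -> : vecf t (mono (ti x) (tj x) * p) = row (enum_rank x) G1 by rewrite rowK enum_rankK.
    exact: row_sub.
  - rewrite /trunc /polyF mulr_suml vecf_sum; apply: summx_sub => x _.
    rewrite -mulrA vecfCM; apply: scalemx_sub.
    have -> : vecf t (mono (ti x) (tj x) * q) = row (enum_rank x) G2 by rewrite rowK enum_rankK.
    exact: row_sub.
have w0 : w = 0.
  have : (w <= G :&: G^C)%MS.
    rewrite sub_capmx wG /=; apply: submx_trans (submxMl _ _) _.
    by rewrite eq_row_base.
  by rewrite capmx_compl submx0 => /eqP.
have u0 : u = 0 by apply/eqP; rewrite -(mulmx_free_eq0 _ (row_base_free (G^C)%MS)); apply/eqP.
move=> i; have := congr1 (fun v : matrix _ _ _ => v ord0 (widen_ord hmn i)) u0; rewrite /= !mxE => <-.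
rewrite (big_pred1 i) // => j /=.

Qed.
End Key.
Section Assemble.
Variable R : realType.
Local Notation C := (R[i]).
Local Notation P := {poly {poly C}}.
Local Notation tofrac := (@FracField.tofrac P).

Lemma ev2M (f g : P) z1 z2 : ev2 (f * g) z1 z2 = ev2 f z1 z2 * ev2 g z1 z2.
Proof. by rewrite /ev2 !hornerM. Qed.
Lemma ev2D (f g : P) z1 z2 : ev2 (f + g) z1 z2 = ev2 f z1 z2 + ev2 g z1 z2.
Proof. by rewrite /ev2 !hornerD. Qed.
Lemma ev2B (f g : P) z1 z2 : ev2 (f - g) z1 z2 = ev2 f z1 z2 - ev2 g z1 z2.
Proof. by rewrite /ev2 !hornerD !hornerN. Qed.
Lemma ev2_1 z1 z2 : ev2 (1 : P) z1 z2 = 1.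
Proof. by rewrite /ev2 !hornerE. Qed.
Lemma coef2_00 (f : P) : coef2 f 0 0 = ev2 f 0 0.
Proof. by rewrite /ev2 /coef2 polyC0 !horner_coef0. Qed.

Lemma shift2_sum I (r : seq I) (F : I -> P) a b :
  shift2 (\sum_(x <- r) F x) a b = \sum_(x <- r) shift2 (F x) a b.
Proof.
elim: r => [|x r ih]; first by rewrite !big_nil -(polyC0) -polyC0 shift2C.
by rewrite !big_cons shift2D ih.
Qed.

Lemma alg_id (K : comNzRingType) (x1 x2 x3 x4 L Ph Pt : K) :
  x1 * x2 * Ph + x3 * x4 * Pt = (x1 * x2 + x3 * x4 * L) * Ph + x3 * x4 * (Pt - L * Ph).
Proof. ring. Qed.
Lemma fld_id (K : fieldType) (S a1 b1 a2 b2 p pt : K) : b1 != 0 -> b2 != 0 ->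
  S = a1 / b1 * p + a2 / b2 * pt -> S * (b1 * b2) = a1 * b2 * p + a2 * b1 * pt.
Proof. by move=> h1 h2 ->; field; rewrite h1 h2. Qed.

Lemma assemble (p pt L : P) l1 l2 m n :
  ordge (shift2 p l1 l2) m -> ordge (shift2 pt l1 l2 - L * shift2 p l1 l2) n ->
  intersection_multiplicity_ge p pt l1 l2 (m * n).
Proof.
move=> hP hQ; have [rh hr] := key hP hQ.
exists (fun i => tofrac (shift2 (rh i) (-l1) (-l2))); split.
  move=> i; exists (shift2 (rh i) (-l1) (-l2)), 1; split.
    by rewrite ev2_1 oner_eq0.
  by rewrite tofrac1 divr1.
move=> a [u [v [[a1 [b1 [hb1 ->]]] [[a2 [b2 [hb2 ->]]] E]]]].
apply: hr.
have nb1 : b1 != 0 by apply: contraNneq hb1 => ->; rewrite /ev2 !horner0.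
have nb2 : b2 != 0 by apply: contraNneq hb2 => ->; rewrite /ev2 !horner0.
set S := \sum_i (a i)%:P%:P * shift2 (rh i) (-l1) (-l2).
have E2 : S * (b1 * b2) = a1 * b2 * p + a2 * b1 * pt.
  apply/eqP; rewrite -tofrac_eq; apply/eqP.
  have ES : tofrac S = \sum_i tofrac ((a i)%:P%:P) * tofrac (shift2 (rh i) (-l1) (-l2)).
    by rewrite rmorph_sum; apply: eq_bigr => i _; rewrite rmorphM.
  rewrite !rmorphM rmorphD !rmorphM.
  have t1 : tofrac b1 != 0 by rewrite tofrac_eq0.
  have t2 : tofrac b2 != 0 by rewrite tofrac_eq0.
  exact: (fld_id t1 t2 (etrans ES E)).
have E3 := congr1 (fun f => shift2 f l1 l2) E2; move: E3 => /=.
rewrite shift2M shift2D !shift2M /S shift2_sum.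
have -> : \sum_i shift2 ((a i)%:P%:P * shift2 (rh i) (-l1) (-l2)) l1 l2 =
          \sum_i (a i)%:P%:P * rh i.
  apply: eq_bigr => i _; rewrite shift2M shift2C shift2_comp !addNr shift2_0 //.
move=> E3.
exists (shift2 a1 l1 l2 * shift2 b2 l1 l2 + shift2 a2 l1 l2 * shift2 b1 l1 l2 * L).
exists (shift2 a2 l1 l2 * shift2 b1 l1 l2).
exists (shift2 b1 l1 l2 * shift2 b2 l1 l2); split.
  by rewrite coef2_00 ev2M !ev2_shift !add0r mulf_neq0.
rewrite E3; apply: alg_id.
Qed.
End Assemble.
Local Open Scope complex_scope.
Section Bound.
Variable R : realType.
Local Notation C := (R[i]).
Local Notation P := {poly {poly C}}.

Definition Kc (F : P) (c1 c2 : C) : C :=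
  \sum_(j < size F) \sum_(i < size F`_j) `|coef2 F i j| * `|c1| ^+ i * `|c2| ^+ j.

Lemma ev2_sumE (F : P) x y : ev2 F x y =
  \sum_(j < size F) \sum_(i < size F`_j) coef2 F i j * x ^+ i * y ^+ j.
Proof.
rewrite /ev2 (horner_coef F) horner_sum; apply: eq_bigr => j _.
rewrite hornerM horner_exp hornerC horner_coef mulr_suml.
by apply: eq_bigr => i _.
Qed.

Lemma Kc_ge0 F c1 c2 : 0 <= Kc F c1 c2.
Proof.
apply: sumr_ge0 => j _; apply: sumr_ge0 => i _.
by rewrite !mulr_ge0 ?exprn_ge0.
Qed.

Lemma BL (F : P) d c1 c2 (s : R) : ordge F d -> 0 <= s -> s <= 1 ->
  `|ev2 F (s%:C * c1) (s%:C * c2)| <= Kc F c1 c2 * (s%:C) ^+ d.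
Proof.
move=> hF s0 s1; rewrite ev2_sumE /Kc mulr_suml.
apply: le_trans (ler_norm_sum _ _ _) _; apply: ler_sum => j _.
rewrite mulr_suml; apply: le_trans (ler_norm_sum _ _ _) _; apply: ler_sum => i _.
have sC0 : 0 <= s%:C by rewrite ler0c.
have sC1 : s%:C <= 1 by rewrite lecR.
case: (ltnP (i + j) d) => h.
  by rewrite hF // !mul0r normr0 !mulr_ge0 ?exprn_ge0.
rewrite !normrM !normrX !normrM (ger0_norm sC0) !exprMn.
have -> : `|coef2 F i j| * (s%:C ^+ i * `|c1| ^+ i) * (s%:C ^+ j * `|c2| ^+ j) =
   `|coef2 F i j| * `|c1| ^+ i * `|c2| ^+ j * s%:C ^+ (i + j) by rewrite exprD; ring.
apply: ler_wpM2l; first by rewrite !mulr_ge0 ?exprn_ge0.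
exact: ler_wiXn2l.
Qed.
End Bound.
Section Hom.
Variable R : realType.
Local Notation C := (R[i]).
Local Notation P := {poly {poly C}}.

Definition homd (F : P) d : P :=
  \sum_(j < d.+1) (coef2 F (d - j) j)%:P%:P * mono (d - j) j.

Lemma coef2_hom F d i j :
  coef2 (homd F d) i j = if (i + j == d)%N then coef2 F i j else 0.
Proof.
rewrite /homd coef2_sum.
under eq_bigr => j' _ do rewrite coef2CM coef2_mono.
case: eqP => h.
  have hj : (j < d.+1)%N by lia.
  rewrite (bigD1 (Ordinal hj)) //= (_ : d - j = i)%N; last by lia.
  rewrite !eqxx mulr1 big1 ?addr0 // => j' hj'.
  case: (j =P j') => [e|]; last by rewrite andbF mulr0.
  by move: hj'; rewrite (_ : j' = Ordinal hj) ?eqxx //; apply: val_inj.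
apply: big1 => j' _.
case: (i =P (d - j')%N) => [e|]; last by rewrite mulr0.
case: (j =P j') => [e'|]; last by rewrite andbF mulr0.
by have := ltn_ord j'; lia.
Qed.

Lemma ordge_hom F d : ordge F d -> ordge (F - homd F d) d.+1.
Proof.
move=> hF i j h; rewrite coef2B coef2_hom.
case: eqP => e; first by rewrite subrr.
by rewrite hF ?subr0 //; lia.
Qed.

Lemma ev2_mono a b x y : ev2 (@mono R a b) x y = x ^+ a * y ^+ b.
Proof. by rewrite /ev2 /mono !hornerE. Qed.

Lemma ev2CM c (F : P) x y : ev2 (c%:P%:P * F) x y = c * ev2 F x y.
Proof. by rewrite /ev2 hornerM hornerC hornerM hornerC. Qed.

Lemma ev2_sum I (r : seq I) (G : I -> P) x y :
  ev2 (\sum_(i <- r) G i) x y = \sum_(i <- r) ev2 (G i) x y.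
Proof. by rewrite /ev2 !horner_sum. Qed.

Definition Hd (F : P) d (c1 c2 : C) : C :=
  \sum_(j < d.+1) coef2 F (d - j) j * c1 ^+ (d - j) * c2 ^+ j.

Lemma ev2_hom F d (s : C) c1 c2 :
  ev2 (homd F d) (s * c1) (s * c2) = s ^+ d * Hd F d c1 c2.
Proof.
rewrite /homd ev2_sum /Hd mulr_sumr; apply: eq_bigr => j _.
rewrite ev2CM ev2_mono !exprMn.
have := ltn_ord j => hj.
have -> : s ^+ d = s ^+ (d - j) * s ^+ j by rewrite -exprD subnK //; lia.
ring.
Qed.

Lemma ev2_split F d (s : C) c1 c2 :
  ev2 F (s * c1) (s * c2) = s ^+ d * Hd F d c1 c2 + ev2 (F - homd F d) (s * c1) (s * c2).
Proof. by rewrite ev2B ev2_hom addrC subrK. Qed.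
End Hom.
Section HdZero.
Variable R : realType.
Local Notation C := (R[i]).
Local Notation P := {poly {poly C}}.

Lemma Hd_zero (F : P) d (l1 l2 : C) : l1 != 0 -> l2 != 0 ->
  (forall b : nat, (0 < b)%N -> (b <= d.+1)%N -> Hd F d (-l1) (-(b%:R * l2)) = 0) ->
  forall i j, (i + j = d)%N -> coef2 F i j = 0.
Proof.
move=> nl1 nl2 hH i j hij.
pose hp : {poly C} := \poly_(j < d.+1) (coef2 F (d - j) j * (-l1) ^+ (d - j) * (-l2) ^+ j).
have Ehp : forall b : nat, hp.[b%:R] = Hd F d (-l1) (-(b%:R * l2)).
  move=> b; rewrite horner_poly /Hd; apply: eq_bigr => j' _.
  by rewrite -mulrN exprMn; ring.
have hp0 : hp = 0.
  apply/eqP; apply/negPn/negP => nz.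
  have := max_poly_roots nz (rs := [seq (x.+1)%:R | x <- iota 0 d.+1]).
  rewrite size_map size_iota.
  have -> : all (root hp) [seq (x.+1)%:R | x <- iota 0 d.+1].
    apply/allP => y /mapP [x]; rewrite mem_iota => /andP [_ hx] ->.
    by rewrite /root Ehp hH.
  have -> : uniq [seq (x.+1)%:R : C | x <- iota 0 d.+1].
    rewrite map_inj_uniq ?iota_uniq // => x y /eqP; rewrite eqr_nat => /eqP [].
    done.
  move=> /(_ isT isT); have := size_poly d.+1 (fun j => coef2 F (d - j) j * (-l1) ^+ (d - j) * (-l2) ^+ j).
  by rewrite -/hp => a b; have := leq_ltn_trans a b; rewrite ltnn.
have := congr1 (fun q : {poly C} => q`_j) hp0; rewrite coef_poly coef0.
have hj : (j < d.+1)%N by lia.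
rewrite hj (_ : d - j = i)%N; last by lia.
move/eqP; rewrite !mulf_eq0 !expf_eq0 !oppr_eq0 (negbTE nl1) (negbTE nl2) !andbF !orbF.
by move/eqP.
Qed.
End HdZero.
Section FR.
Variable R : realType.
Lemma FR (h A B : R) : 0 <= h -> 0 <= A -> 0 <= B ->
  (forall eps, 0 < eps -> exists2 s0, 0 < s0 &
     forall s, 0 < s -> s < s0 -> h <= eps * A + B * s) -> h = 0.
Proof.
move=> h0 A0 B0 H.
have [hz|hpos] : h = 0 \/ 0 < h.
  by move: h0; rewrite le_eqVlt => /orP [/eqP <-|->]; [left|right].
  done.
pose eps := h / (2 * (A + 1)).
have nA : 2 * (A + 1) != 0 by apply/eqP; lra.
have e1 : eps * (2 * (A + 1)) = h by rewrite /eps divfK.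
have eps0 : 0 < eps by rewrite /eps divr_gt0 //; lra.
have [s0 s00 Hs] := H eps eps0.
pose t := h / (4 * (B + 1)).
have nB : 4 * (B + 1) != 0 by apply/eqP; lra.
have e2 : t * (4 * (B + 1)) = h by rewrite /t divfK.
have t0 : 0 < t by rewrite /t divr_gt0 //; lra.
pose s := Num.min (s0 / 2) t.
have sp : 0 < s by rewrite /s lt_min t0 andbT divr_gt0.
have ss0 : s < s0 by rewrite /s gt_min; apply/orP; left; lra.
have st : s <= t by rewrite /s ge_min lexx orbT.
have := Hs s sp ss0.
have : B * s <= B * t by apply: ler_wpM2l.
nra.
Qed.
End FR.
Section Core.
Variable R : realType.
Local Notation C := (R[i]).
Local Notation P := {poly {poly C}}.

Lemma realC (x : C) : 0 <= x -> exists r : R, 0 <= r /\ x = r%:C.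
Proof.
case: x => a b; rewrite lecE /= => /andP [/eqP e ha].
by exists a; split => //; rewrite e.
Qed.

Lemma ltC1 (r : R) : (r%:C < 1 :> C) = (r < 1).
Proof. by rewrite (_ : (1 : C) = 1%:C) // ltcR. Qed.
Lemma leCR (r r' : R) : (r%:C <= r'%:C :> C) = (r <= r').
Proof. exact: lecR. Qed.
Lemma CM (r r' : R) : (r * r')%:C = r%:C * r'%:C :> C.
Proof. exact: rmorphM. Qed.
Lemma CD (r r' : R) : (r + r')%:C = r%:C + r'%:C :> C.
Proof. exact: rmorphD. Qed.
Lemma CB (r r' : R) : (r - r')%:C = r%:C - r'%:C :> C.
Proof. exact: rmorphB. Qed.
Lemma CX (r : R) n : (r ^+ n)%:C = r%:C ^+ n :> C.
Proof. exact: rmorphXn. Qed.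
Lemma C1 : (1 : R)%:C = 1 :> C. Proof. by []. Qed.
Lemma Cn (n : nat) : (n%:R : R)%:C = n%:R :> C. Proof. exact: rmorph_nat. Qed.
End Core.
Lemma sfacts (R : realType) (s br : R) : 0 < s -> 1 <= br -> s * (1 + br) < 1 ->
  [/\ s <= 1, s * br < 1, 0 < s * br, 0 <= 1 - s & 0 <= 1 - s * br].
Proof. move=> h1 h2 h3; split; nra. Qed.

Lemma gamC (R : realType) (s br : R) : 0 < s -> 1 <= br ->
  forall x y : R[i], x \in [:: s%:C; (s * br)%:C; s%:C; (s * br)%:C] ->
    y \in [:: s%:C; (s * br)%:C; s%:C; (s * br)%:C] ->
    x <= (br + 1)%:C * y /\ y <= (br + 1)%:C * x.
Proof.
move=> h1 h2 x y; rewrite !inE => /or4P [] /eqP -> /or4P [] /eqP ->;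
  rewrite -!CM !leCR; split; nra.
Qed.

Lemma fin_ineq (R : realType) (s hr k0 k1 eps D : R) (d M k : nat) :
  0 < s -> s <= 1 -> 0 <= k0 -> 0 <= k1 -> 0 < eps -> 0 < D -> (d <= M + k)%N ->
  s ^+ d * hr <= k0 * s ^+ M * (eps * (s * D) ^+ k) + k1 * s ^+ d.+1 ->
  hr <= eps * (k0 * D ^+ k) + k1 * s.
Proof.
move=> s0 s1 k00 k10 e0 D0 hd H.
have sd0 : 0 < s ^+ d by rewrite exprn_gt0.
rewrite -(ler_pM2l sd0); apply: le_trans H _.
have eM : s ^+ M * s ^+ k = s ^+ d * s ^+ (M + k - d) by rewrite -!exprD subnKC.
have E1 : k0 * s ^+ M * (eps * (s * D) ^+ k) = k0 * eps * D ^+ k * (s ^+ M * s ^+ k).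
  by rewrite exprMn; ring.
rewrite E1 eM exprS.
set x := s ^+ (M + k - d).
have x1 : x <= 1 by apply: exprn_ile1; lra.
have E2 : s ^+ d * (eps * (k0 * D ^+ k) + k1 * s) - (k0 * eps * D ^+ k * (s ^+ d * x) + k1 * (s * s ^+ d))
   = s ^+ d * (k0 * eps * D ^+ k) * (1 - x) by ring.
rewrite -subr_ge0 E2; apply: mulr_ge0; last by lra.
by apply: mulr_ge0; [apply: ltW | rewrite mulr_ge0 ?exprn_ge0 ?mulr_ge0 // ltW].
Qed.

Section Core2.
Variable R : realType.
Local Notation C := (R[i]).
Local Notation P := {poly {poly C}}.

Lemma core (p pt L : P) (l1 l2 : C) (k M d b : nat) :
  `|l1| = 1 -> `|l2| = 1 ->
  (forall z1 z2 : C, `|z1| < 1 -> `|z2| < 1 -> ev2 p z1 z2 != 0) ->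
  (forall c : R, 1 < c -> forall eps : R, 0 < eps -> exists2 delta : R, 0 < delta &
    forall z1 z2 : C, Gamma c l1 l2 z1 z2 -> dist2 z1 z2 l1 l2 < delta%:C ->
      `|ev2 pt z1 z2 / ev2 p z1 z2 - ev2 L (z1 - l1) (z2 - l2)|
        <= eps%:C * dist2 z1 z2 l1 l2 ^+ k) ->
  ordge (shift2 p l1 l2) M ->
  ordge (shift2 pt l1 l2 - L * shift2 p l1 l2) d -> (d <= M + k)%N -> (0 < b)%N ->
  Hd (shift2 pt l1 l2 - L * shift2 p l1 l2) d (-l1) (-(b%:R * l2)) = 0.
Proof.
move=> hl1 hl2 hst hnt hP hQ hd hb.
set Q : P := shift2 pt l1 l2 - L * shift2 p l1 l2.
set Ph := shift2 p l1 l2.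
set c1 := -l1; set c2 := -(b%:R * l2).
have [hr [hr0 hrE]] := realC (normr_ge0 (Hd Q d c1 c2)).
have [k0 [k00 k0E]] := realC (Kc_ge0 Ph c1 c2).
have [k1 [k10 k1E]] := realC (Kc_ge0 (Q - homd Q d) c1 c2).
pose br : R := b%:R.
have br1 : 1 <= br by rewrite /br ler1n.
pose D : R := 1 + br.
have D0 : 0 < D by rewrite /D; lra.
suff : hr = 0 by move=> h0; apply/eqP; rewrite -normr_eq0 hrE h0.
apply: (@FR _ hr (k0 * D ^+ k) k1) => //; first by rewrite mulr_ge0 // exprn_ge0 // ltW.
move=> eps eps0.
have [del del0 Hdel] := hnt (br + 1) (ltac:(lra)) eps eps0.
exists (Num.min 1 del / D); first by rewrite divr_gt0 // lt_min ltr01 del0.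
move=> s s0 ss0.
have sD1 : s * D < 1.
  by move: ss0; rewrite ltr_pdivlMr // lt_min => /andP [].
have sDd : s * D < del.
  by move: ss0; rewrite ltr_pdivlMr // lt_min => /andP [].
have [s1 sb1 sbp s1' sb1'] := sfacts s0 br1 sD1.
have sD0 : 0 <= s * D by rewrite mulr_ge0 // ltW.
set w1 := s%:C * c1; set w2 := s%:C * c2.
set z1 := w1 + l1; set z2 := w2 + l2.
have sC0 : 0 <= s%:C :> C by rewrite ler0c ltW.
have nw1 : `|w1| = s%:C by rewrite /w1 /c1 normrM normrN hl1 mulr1 ger0_norm.
have nw2 : `|w2| = (s * br)%:C.
  by rewrite /w2 /c2 normrM normrN normrM hl2 mulr1 normr_nat ger0_norm // CM Cn.
have e1 : z1 - l1 = w1 by rewrite /z1 addrK.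
have e2 : z2 - l2 = w2 by rewrite /z2 addrK.
have nz1 : `|z1| = (1 - s)%:C.
  have -> : z1 = (1 - s)%:C * l1 by rewrite /z1 /w1 /c1 CB C1; ring.
  by rewrite normrM hl1 mulr1 ger0_norm // ler0c.
have nz2 : `|z2| = (1 - s * br)%:C.
  have -> : z2 = (1 - s * br)%:C * l2 by rewrite /z2 /w2 /c2 CB C1 CM Cn; ring.
  by rewrite normrM hl2 mulr1 ger0_norm // ler0c.
have hG : Gamma (br + 1) l1 l2 z1 z2.
  split; first by rewrite nz1 ltC1; lra.
  split; first by rewrite nz2 ltC1; lra.
  rewrite /= e1 e2 nw1 nw2 nz1 nz2 -C1 -!CB.
  have -> : 1 - (1 - s) = s by ring.
  have -> : 1 - (1 - s * br) = s * br by ring.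
  exact: gamC.
have hdist : dist2 z1 z2 l1 l2 <= (s * D)%:C.
  rewrite /dist2 e1 e2 nw1 nw2 -!CX -CD.
  rewrite -(@sqrCK _ ((s * D)%:C)); last by rewrite ler0c.
  have ssb : 0 <= s * s * br by rewrite !mulr_ge0 // ltW // (lt_le_trans ltr01 br1).
  have ss0' : 0 <= s * s by rewrite mulr_ge0 // ltW.
  have sbb : 0 <= s * br * (s * br) by rewrite mulr_ge0 // mulr_ge0 // ltW // (lt_le_trans ltr01 br1).
  rewrite ler_sqrtC ?qualifE /= ?ler0c ?exprn_ge0 // -?CX ?leCR ?expr2 //.
  - have : s * s + s * br * (s * br) + 2 * (s * s * br) = s * D * (s * D) by rewrite /D; ring.
    lra.
  - lra.
have dist0 : 0 <= dist2 z1 z2 l1 l2 by rewrite /dist2 sqrtC_ge0 addr_ge0 // exprn_ge0.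
have hdel : dist2 z1 z2 l1 l2 < del%:C.
  by apply: le_lt_trans hdist _; rewrite ltcR.
have hpz : ev2 p z1 z2 != 0 by apply: hst; rewrite ?nz1 ?nz2 ltC1; lra.
have hf := Hdel z1 z2 hG hdel; rewrite e1 e2 in hf.
have eQ : ev2 Q w1 w2 = ev2 p z1 z2 * (ev2 pt z1 z2 / ev2 p z1 z2 - ev2 L w1 w2).
  rewrite /Q ev2B ev2M !ev2_shift -/z1 -/z2 mulrBr [ev2 p z1 z2 * (_ / _)]mulrC divfK //.
  by rewrite [ev2 p z1 z2 * _]mulrC.
have bP : `|ev2 p z1 z2| <= k0%:C * (s%:C) ^+ M.
  by rewrite -k0E -ev2_shift; apply: BL => //; lra.
have bQ : `|ev2 Q w1 w2| <= k0%:C * (s%:C) ^+ M * (eps%:C * (s * D)%:C ^+ k).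
  rewrite eQ normrM; apply: ler_pM => //.
  apply: le_trans hf _; apply: ler_wpM2l; first by rewrite ler0c ltW.
  by apply: lerXn2r => //; rewrite qualifE /= ?ler0c.
have bR : `|ev2 (Q - homd Q d) w1 w2| <= k1%:C * (s%:C) ^+ d.+1.
  by rewrite -k1E; apply: BL => //; [apply: ordge_hom | lra].
have bH : `|s%:C ^+ d * Hd Q d c1 c2| <= k0%:C * (s%:C) ^+ M * (eps%:C * (s * D)%:C ^+ k)
                                       + k1%:C * (s%:C) ^+ d.+1.
  have -> : s%:C ^+ d * Hd Q d c1 c2 = ev2 Q w1 w2 - ev2 (Q - homd Q d) w1 w2.
    by rewrite (ev2_split Q d) addrK.
  by apply: le_trans (ler_normB _ _) _; apply: lerD.
move: bH; rewrite normrM normrX (ger0_norm sC0) hrE -!CX -!CM -CD leCR => bH.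
exact: (fin_ineq s0 s1 k00 k10 eps0 D0 hd bH).
Qed.
End Core2.
Local Close Scope complex_scope.
Theorem corollary14p9 (R : realType) (p : {poly {poly R[i]}}) (l1 l2 : R[i])
    (k M : nat) :
  `|l1| = 1 -> `|l2| = 1 ->
  semi_stable p ->
  nt_Ck (fun z1 z2 => ev2 (ptilde p) z1 z2 / ev2 p z1 z2) l1 l2 k ->
  vanishes_to_order p l1 l2 M ->
  intersection_multiplicity_ge p (ptilde p) l1 l2 (M * (M + k + 1)).
Proof.
move=> hl1 hl2 [hst _] [L [_ hnt]] [_ hvan].
have hP : ordge (shift2 p l1 l2) M by exact: hvan.
have nl1 : l1 != 0 by apply/eqP => e; move: hl1; rewrite e normr0 => /eqP; rewrite eq_sym oner_eq0.
have nl2 : l2 != 0 by apply/eqP => e; move: hl2; rewrite e normr0 => /eqP; rewrite eq_sym oner_eq0.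
have hnt' : forall c : R, 1 < c -> forall eps : R, 0 < eps -> exists2 delta : R, 0 < delta &
    forall z1 z2 : R[i], Gamma c l1 l2 z1 z2 -> dist2 z1 z2 l1 l2 < (delta%:C)%C ->
      `|ev2 (ptilde p) z1 z2 / ev2 p z1 z2 - ev2 L (z1 - l1) (z2 - l2)|
        <= (eps%:C)%C * dist2 z1 z2 l1 l2 ^+ k.
  move=> c hc eps he; have [del del0 H] := hnt c hc eps he.
  by exists del => // z1 z2 hg hd; apply: H.
have hQ : forall d, (d <= (M + k).+1)%N ->
    ordge (shift2 (ptilde p) l1 l2 - L * shift2 p l1 l2) d.
  elim=> [_|d ih hd]; first exact: ordge0.
  have ihd := ih (ltnW hd).
  move=> i j hij; case: (ltnP (i + j) d) => h; first exact: ihd.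
  have e : (i + j = d)%N by lia.
  apply: (Hd_zero nl1 nl2 _ e) => b hb _.
  by apply: (core hl1 hl2 hst hnt' hP ihd) => //; lia.
apply: assemble hP _.
by apply: hQ; lia.
Qed.
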